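(* For every instance $\pi$ of the fully labeled one-dimensional rearrangement problem (LOR) on $m$ cells, the plan produced by the algorithm SweepCyclesLOR is valid and uses the minimum number of pick-n-swap operations among all valid plans for $\pi$.
   Context: Setting (LOR). A row of $m$ cells $1,\dots,m$, cell $i$ located at the point $i$ on the real line. Each cell initially holds exactly one item; items carry distinct labels $1,\dots,m$. An instance is a permutation $\pi$ of $\{1,\dots,m\}$, where $\pi_i$ is the label of the item initially in cell $i$; the goal is that item $i$ ends in cell $i$ for every $i$. A robot end-effector can hold at most one item; it starts at the rest position $p_0=$ cell $1$ holding nothing. A pick-n-swap operation performed at a cell $p$ is: if the end-effector holds nothing, pick up the item in $p$; if it holds an item and $p$ contains an item, exchange the two (the held item is put into $p$ and the item of $p$ becomes held); if it holds an item and $p$ is empty, put the held item into $p$. A plan is a sequence $P=(p_0,p_1,\dots,p_N)$ of cells: the end-effector travels from $p_0$ to $p_1$, performs a pick-n-swap there, travels to $p_2$, and so on, and finally returns to $p_{N+1}:=p_0$. It is valid if at the end every item $i$ is in cell $i$ and the end-effector holds nothing. $N$ is the number of pick-n-swaps of $P$. SweepCyclesLOR: while some cell $i$ holds an item with label $\ne i$, let $i$ be the smallest such cell; go to $i$ and pick up its item, say with label $g$; while $g\neq i$, go to cell $g$ and swap (item $g$ is placed in cell $g$ and the item previously in cell $g$, with label $g'$, becomes held; set $g:=g'$); finally go to cell $i$ (now empty) and place the held item (label $i$). When no misplaced item remains, return to cell $1$. *)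

(* Defs.v *)
(* Cells and labels are 0-indexed: cell / label i : 'I_m
   stands for the paper's cell / label i+1.  In particular the rest position
   p_0 = cell 1 is ord 0 (it only matters for travel, not for the number of
   pick-n-swaps, so it is left implicit). *)
From mathcomp Require Import all_boot all_fingroup.
Set Implicit Arguments. Unset Strict Implicit. Unset Printing Implicit Defensive.

Section LOR.
Variable m : nat.

(* contents of the cells (None = empty) and the item held by the end-effector *)
Definition config := (('I_m -> option 'I_m) * option 'I_m)%type.

Definition init_config (pi : {perm 'I_m}) : config := (fun i => Some (pi i), None).

(* pick-n-swap at cell p.  All three cases of the paper (pick / exchange / put)
   are exactly "exchange the hand content with the cell content"; the
   remaining case (hand empty, cell empty) is then a no-op. *)
Definition pns (s : config) (p : 'I_m) : config :=
  let: (c, h) := s in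
  ((fun j => if j == p then h else c j), c p).

(* a plan (p_0, p_1, ..., p_N) is represented by the sequence [p_1; ...; p_N]
   of cells where pick-n-swaps are performed; N = size P *)
Definition run (pi : {perm 'I_m}) (P : seq 'I_m) : config :=
  foldl pns (init_config pi) P.

Definition valid_plan (pi : {perm 'I_m}) (P : seq 'I_m) : Prop :=
  (forall i : 'I_m, (run pi P).1 i = Some i) /\ (run pi P).2 = None.

(* inner loop of SweepCyclesLOR for the cycle started at cell i:
   while the held label g differs from i go to g and swap; then go to i
   and place. *)
Fixpoint sweep_inner (fuel : nat) (i : 'I_m) (s : config) : seq 'I_m * config :=
  match fuel with
  | 0 => ([::], s)
  | fuel'.+1 =>
    match s.2 with
    | None => ([::], s)
    | Some g =>
      if g == i then ([:: i], pns s i)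
      else let: (P, s') := sweep_inner fuel' i (pns s g) in (g :: P, s')
    end
  end.

(* outer loop: take the smallest cell i with a misplaced item
   (ord_enum m lists the cells in increasing order), pick its item, run the
   inner loop; stop when no misplaced item remains. *)
Fixpoint sweep_outer (fuel : nat) (s : config) : seq 'I_m :=
  match fuel with
  | 0 => [::]
  | fuel'.+1 =>
    match [seq i <- ord_enum m | s.1 i != Some i] with
    | [::] => [::]
    | i :: _ =>
      let: (P, s') := sweep_inner m.+1 i (pns s i) in
      i :: P ++ sweep_outer fuel' s'
    end
  end.

(* the plan produced by SweepCyclesLOR on instance pi (fuel m.+1 is ample:
   each outer iteration fixes at least two cells, each inner loop has at
   most m iterations) *)
Definition SweepCyclesLOR (pi : {perm 'I_m}) : seq 'I_m :=
  sweep_outer m.+1 (init_config pi).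

End LOR.

(* Main.v *)
Require Import Defs.
From mathcomp Require Import all_boot all_fingroup.
From mathcomp Require Import zify.

Set Implicit Arguments. Unset Strict Implicit. Unset Printing Implicit Defensive.

Section Proof.
Variable m : nat.
Implicit Types (s : config m) (p i g : 'I_m).

Definition fs s (x : option 'I_m) : option 'I_m :=
  if x is Some i then s.1 i else s.2.

Definition Inv s := injective (fs s).

Lemma fs_pns s p : fs (pns s p) =1 fs s \o tperm None (Some p).
Proof.
case: s => c h [i|] /=; case: tpermP => //=.
- by move=> [->]; rewrite eqxx.
- move=> _ /eqP N; case: eqP => // E; by rewrite E eqxx in N.
Qed.

Lemma Inv_pns s p : Inv s -> Inv (pns s p).
Proof.
move=> H x y; rewrite !fs_pns /= => /H; exact: (can_inj (tpermK _ _)).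
Qed.

Definition sig s : {perm option 'I_m} := @insubd _ _ {perm option 'I_m} (1%g : {perm option 'I_m}) [ffun x => fs s x].

Lemma sigE s : Inv s -> forall x, sig s x = fs s x.
Proof.
move=> H x.
have Hi : injectiveb [ffun x => fs s x].
  by apply/injectiveP => a b; rewrite !ffunE; apply: H.
by rewrite /sig [@fun_of_perm]unlock insubdK // ffunE.
Qed.

Lemma sig_pns s p : Inv s -> sig (pns s p) = (tperm None (Some p) * sig s)%g.
Proof.
move=> H; apply/permP => x.
by rewrite permM sigE ?sigE //; [rewrite fs_pns | exact: Inv_pns].
Qed.

Definition K s := #|porbits (sig s)|.
Definition F s := #|[pred i : 'I_m | s.1 i == Some i]|.

Lemma F_le s : F s <= m.
Proof. by rewrite /F -[X in _ <= X]card_ord max_card. Qed.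

Lemma F_pns s p :
  F (pns s p) + (s.1 p == Some p) = F s + (s.2 == Some p).
Proof.
rewrite /F (cardD1 p) [X in _ = X + _](cardD1 p).
have -> : #|[predD1 [pred i | (pns s p).1 i == Some i] & p]| =
          #|[predD1 [pred i | s.1 i == Some i] & p]|.
  apply: eq_card => j; rewrite !inE; case: s => c h /=.
  by case: (j =P p).
case: s => c h /=; rewrite !inE /= eqxx; move: (h == Some p) (c p == Some p) #|_| => [] [] r /=; lia.
Qed.

Lemma porbit_fix (T : finType) (t : {perm T}) x y :
  t x = x -> (y \in porbit t x) = (y == x).
Proof.
move=> tx; apply/porbitP/eqP => [[k ->]|->]; last by exists 0; rewrite expg0 perm1.
elim: k => [|k IH]; first by rewrite expg0 perm1.
by rewrite expgSr permM IH.
Qed.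

Lemma K_pns s p :
  Inv s -> K (pns s p) + (None \notin porbit (sig s) (Some p)).*2 = K s + 1.
Proof.
move=> H; rewrite /K sig_pns // porbits_mul_tperm //.
Qed.

Definition good s p := s.2 = Some p \/ (s.2 = None /\ s.1 p != Some p).

Lemma step_le s p : Inv s -> K s + 2 * F (pns s p) <= K (pns s p) + 2 * F s + 1.
Proof.
move=> H; have h1 := K_pns p H; have h2 := F_pns s p.
case E: (s.2 == Some p).
  have : None \in porbit (sig s) (Some p).
    rewrite porbit_sym; apply/porbitP; exists 1; rewrite expg1 sigE //=.
    by move/eqP: E.
  move=> I; rewrite I /= in h1; rewrite E in h2; lia.
rewrite E in h2.
case: (None \notin _) h1 => /= h1; lia.
Qed.

Lemma step_eq s p : Inv s -> good s p ->
  K s + 2 * F (pns s p) = K (pns s p) + 2 * F s + 1.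
Proof.
move=> H G; have h1 := K_pns p H; have h2 := F_pns s p.
case: G => [E | [E N]].
- have : None \in porbit (sig s) (Some p).
    rewrite porbit_sym; apply/porbitP; exists 1; rewrite expg1 sigE //=.
  move=> I; rewrite I /= in h1.
  have N : (s.1 p == Some p) = false.
    apply/negbTE/eqP => E'; have : fs s None = fs s (Some p) by rewrite /= E E'.
    by move/H.
  rewrite E eqxx N in h2; lia.
- have : None \notin porbit (sig s) (Some p).
    by rewrite porbit_sym porbit_fix ?sigE //= E.
  move=> I; rewrite I /= in h1.
  rewrite E (negbTE N) /= in h2; lia.
Qed.

Lemma path_le s P : Inv s ->
  K s + 2 * F (foldl (@pns m) s P) <= K (foldl (@pns m) s P) + 2 * F s + size P.
Proof.
elim: P s => [|p P IH] s H /=; first lia.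
have := IH _ (@Inv_pns s p H); have := step_le p H; lia.
Qed.

Fixpoint goodpath s P := match P with
  | [::] => True | p :: P' => good s p /\ goodpath (pns s p) P' end.

Lemma goodpath_cat s P1 P2 :
  goodpath s P1 -> goodpath (foldl (@pns m) s P1) P2 -> goodpath s (P1 ++ P2).
Proof. by elim: P1 s => [|p P IH] s //= [G1 G2] G3; split => //; apply: IH. Qed.

Lemma path_eq s P : Inv s -> goodpath s P ->
  K s + 2 * F (foldl (@pns m) s P) = K (foldl (@pns m) s P) + 2 * F s + size P.
Proof.
elim: P s => [|p P IH] s H /=; first lia.
move=> [G1 G2].
have := IH _ (@Inv_pns s p H) G2; have := step_eq H G1; lia.
Qed.

Lemma Inv_fold s P : Inv s -> Inv (foldl (@pns m) s P).
Proof. by elim: P s => [|p P IH] s H //=; apply: IH; apply: Inv_pns. Qed.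

Definition final s := (forall i, s.1 i = Some i) /\ s.2 = None.

Lemma final_KF s : final s -> K s = m.+1 /\ F s = m.
Proof.
move=> [H1 H2]; split; rewrite /K.
  have -> : sig s = 1%g.
    apply/permP => x; rewrite perm1 sigE; last first.
      by move=> a b; case: a => [a|]; case: b => [b|] /=; rewrite ?H1 ?H2 // => ->.
    by case: x => [x|] /=; rewrite ?H1 ?H2.
  rewrite /porbits.
  have E : porbit 1 =1 (fun x : option 'I_m => [set x]).
    move=> x; apply/setP => y; rewrite porbit_fix ?perm1 // inE //.
  rewrite (eq_imset _ E) card_imset; last exact: set1_inj.
  by rewrite card_option card_ord.
rewrite /F -[RHS]card_ord; apply: eq_card => i; by rewrite inE /= H1 eqxx.
Qed.

Lemma inner fuel i s g : Inv s -> s.2 = Some g -> s.1 i = None -> m - F s < fuel ->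
  goodpath s (sweep_inner fuel i s).1 /\
  foldl (@pns m) s (sweep_inner fuel i s).1 = (sweep_inner fuel i s).2 /\
  ((sweep_inner fuel i s).2).2 = None /\ F s < F (sweep_inner fuel i s).2.
Proof.
elim: fuel s g => [|fuel IH] s g H Hh Hi Hf; first lia.
rewrite /= Hh; case: eqP => [E|ngi].
  subst g.
  have h2 := F_pns s i; rewrite Hh eqxx Hi /= in h2.
  rewrite /=; split; first by split => //; left.
  by split => //; split; [case: s Hh Hi {H h2 Hf} => c h /= _ -> | lia].
have h2 := F_pns s g; rewrite Hh eqxx in h2.
have Hg : s.1 g != Some g.
  apply/eqP => E'; have : fs s None = fs s (Some g) by rewrite /= E' Hh.
  by move/H.
have [g' Hg'] : exists g', (pns s g).2 = Some g'.
  case: s H Hh Hi Hg {h2 Hf} => c h /= H Hh Hi Hg.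
  case E: (c g) => [g'|]; first by exists g'.
  have : fs (c, h) (Some g) = fs (c, h) (Some i) by rewrite /= E Hi.
  by move/H => [] /ngi.
rewrite (negbTE Hg) in h2.
have Hi' : (pns s g).1 i = None.
  case: s {H Hh Hg h2 Hf Hg'} Hi => c h /= Hi. by case: eqP => // E; case: ngi.
have := IH _ _ (@Inv_pns s g H) Hg' Hi'; have := F_le (pns s g).
case: (sweep_inner fuel i (pns s g)) => P s' /= Fl IH'.
have [G1 [G2 [G3 G4]]] := IH' ltac:(lia).
split; first by split => //; left.
by split => //; split => //; lia.
Qed.

Lemma sweep_outerS fuel s : sweep_outer fuel.+1 s =
    match [seq i <- ord_enum m | s.1 i != Some i] with
    | [::] => [::]
    | i :: _ =>
      let: (P, s') := sweep_inner m.+1 i (pns s i) in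
      i :: P ++ sweep_outer fuel s'
    end.
Proof. by []. Qed.

Lemma outer fuel s : Inv s -> s.2 = None -> m - F s < fuel ->
  goodpath s (sweep_outer fuel s) /\ final (foldl (@pns m) s (sweep_outer fuel s)).
Proof.
elim: fuel s => [|fuel IH] s H Hh Hf; first lia.
rewrite sweep_outerS; case E: [seq i <- ord_enum m | s.1 i != Some i] => [|i r].
  split => //; split => // i; apply/eqP; apply: contraT => N.
  have : i \in [seq i <- ord_enum m | s.1 i != Some i] by rewrite mem_filter N mem_ord_enum.
  by rewrite E.
have Ni : s.1 i != Some i.
  have : i \in [seq i <- ord_enum m | s.1 i != Some i] by rewrite E inE eqxx.
  by rewrite mem_filter => /andP[].
have h2 := F_pns s i; rewrite Hh (negbTE Ni) /= in h2.
have [g Hg] : exists g, (pns s i).2 = Some g.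
  case: s H Hh Ni {E h2 Hf} => c h /= H Hh Ni.
  case E: (c i) => [g|]; first by exists g.
  have : fs (c, h) (Some i) = fs (c, h) None by rewrite /= E Hh.
  by move/H.
have Hi : (pns s i).1 i = None by case: s Hh {H Ni E h2 Hf Hg} => c h /= ->; rewrite eqxx.
have := @inner m.+1 i (pns s i) g (@Inv_pns s i H) Hg Hi; have := F_le s.
case: (sweep_inner m.+1 i (pns s i)) => P s' /= Fl IN.
have [G1 [G2 [G3 G4]]] := IN ltac:(lia).
have Inv' : Inv s' by rewrite -G2; apply: Inv_fold; apply: Inv_pns.
have Fl' := F_le s'; have [O1 O2] := IH s' Inv' G3 ltac:(lia).
split.
  split; first by right.
  apply: goodpath_cat => //; by rewrite G2.
by rewrite foldl_cat G2.
Qed.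

End Proof.

Theorem proposition1 (m : nat) (pi : {perm 'I_m}) :
  valid_plan pi (SweepCyclesLOR pi) /\
  (forall P : seq 'I_m, valid_plan pi P -> size (SweepCyclesLOR pi) <= size P).
Proof.
have H0 : Inv (init_config pi).
  by move=> [a|] [b|] //= [] /perm_inj ->.
have [G Fi] := @outer m m.+1 (init_config pi) H0 erefl ltac:(lia).
split; first by exact: Fi.
move=> P [V1 V2].
have FP : final (run pi P) by [].
have [K1 F1] := final_KF FP; have [K2 F2] := final_KF Fi.
have := path_le P H0; have := path_eq H0 G.
rewrite /run in K1 F1; rewrite /SweepCyclesLOR; lia.
Qed.
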